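(* $m(K_{2,2,3})=m(K_{2,3,3})=3$.
   Context: All graphs are finite, simple and undirected. A list assignment $L$ for a graph $G$ assigns to each vertex $v$ a set $L(v)$ of colors; an $L$-coloring is a proper vertex coloring $c$ of $G$ with $c(v)\in L(v)$ for every vertex $v$. A $k$-list assignment is a list assignment with $|L(v)|=k$ for all $v$. $G$ is uniquely $k$-list colorable (U$k$LC) if there exists a $k$-list assignment $L$ such that $G$ has exactly one $L$-coloring. $G$ has property $M(k)$ if it is not U$k$LC, i.e. for every $k$-list assignment $L$, $G$ has either no $L$-coloring or at least two $L$-colorings. The m-number $m(G)$ is the least integer $k\ge 1$ such that $G$ has property $M(k)$. $K_{n_1,\dots,n_r}$ denotes the complete $r$-partite graph with parts of sizes $n_1,\dots,n_r$. *)

(* Defs.v *)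
From mathcomp Require Import all_boot.
Set Implicit Arguments. Unset Strict Implicit. Unset Printing Implicit Defensive.

(* A finite simple graph: vertex type T : finType, adjacency e : rel T
   (symmetric, irreflexive).  Colors are natural numbers. *)

Definition k_list_assignment (T : finType) (k : nat) (L : T -> seq nat) : Prop :=
  forall v, uniq (L v) /\ size (L v) = k.

Definition L_coloring (T : finType) (e : rel T) (L : T -> seq nat) (c : T -> nat) : Prop :=
  (forall v, c v \in L v) /\ (forall x y, e x y -> c x <> c y).

Definition UkLC (T : finType) (e : rel T) (k : nat) : Prop :=
  exists L : T -> seq nat, k_list_assignment k L /\
    exists c, L_coloring e L c /\
      forall c', L_coloring e L c' -> forall v, c' v = c v.

Definition property_M (T : finType) (e : rel T) (k : nat) : Prop := ~ UkLC e k.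

Definition is_m_number (T : finType) (e : rel T) (m : nat) : Prop :=
  1 <= m /\ property_M e m /\ (forall k, 1 <= k < m -> ~ property_M e k).

(* Complete multipartite graph K_{n_1,...,n_r} with s = [:: n_1; ...; n_r]:
   vertices are pairs (part i, index j < n_i); adjacent iff in different parts. *)
Definition cmp_vertex (s : seq nat) : finType :=
  {i : 'I_(size s) & 'I_(nth 0 s i)}.

Definition cmp_edge (s : seq nat) : rel (cmp_vertex s) :=
  fun x y => tag x != tag y.

(* Main.v *)
Require Import Defs.
From mathcomp Require Import all_boot.
Set Implicit Arguments. Unset Strict Implicit. Unset Printing Implicit Defensive.


Section Checker.
Variable pt : seq nat.
Definition nv := size pt.
Definition ptn u := nth 0 pt u.

Definition opts (cs : seq nat) (alts : seq (option (nat * nat))) v :=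
  nth 0 cs v :: (if nth None alts v is Some (x, y) then [:: x; y] else [::]).

Definition properb (c' : seq nat) : bool :=
  all (fun u => all (fun v => (nth 0 c' u != nth 0 c' v) || (ptn u == ptn v)) (iota 0 nv)) (iota 0 nv).

Definition checkc cs alts c' : bool :=
  [&& all (fun v => nth 0 c' v \in opts cs alts v) (iota 0 nv), properb c' &
      has (fun v => nth 0 c' v != nth 0 cs v) (iota 0 nv)].

Fixpoint firstsome A (l : seq nat) (F : nat -> option A) : option A :=
  match l with [::] => None | x :: l' => if F x is Some r then Some r else firstsome l' F end.

Fixpoint go2 (vs : seq (nat * nat * seq nat)) (acc : seq (nat * nat)) (diff : bool) : option (seq nat) :=
  match vs with
  | [::] => if diff then Some (rev (map snd acc)) else None
  | (p, own, os) :: rest => firstsome os (fun x =>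
      if has (fun pc => if eqn pc.2 x then negb (eqn pc.1 p) else false) acc then None
      else go2 rest ((p, x) :: acc) (if diff then true else negb (eqn x own)))
  end.

Definition findc cs alts :=
  go2 [seq (ptn v, nth 0 cs v, opts cs alts v) | v <- iota 0 nv] [::] false.

Definition choices cs k :=
  let cand := [seq u <- iota 0 nv | (ptn u != ptn k) && (nth 0 cs u == u)] in
  flatten [seq [seq (x, y) | y <- cand & x < y] | x <- cand].

Fixpoint search cs (ord : seq nat) (alts : seq (option (nat * nat))) : bool :=
  if (if findc cs alts is Some c' then checkc cs alts c' else false) then true else
  (if ord is k :: rest then all (fun p => search cs rest (set_nth None alts k (Some p))) (choices cs k) else false).

Definition csize cs v := count (pred1 (nth 0 cs v)) cs.
Definition order cs := sort (fun a b => csize cs a <= csize cs b) (rev (iota 0 nv)).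

Definition allseqs (ls : seq (seq nat)) : seq (seq nat) :=
  foldr (fun l acc => flatten [seq [seq x :: r | r <- acc] | x <- l]) [:: [::]] ls.

Definition cand_cs i := [seq u <- iota 0 i.+1 | ptn u == ptn i].
Definition validcs cs := all (fun i => nth 0 cs (nth 0 cs i) == nth 0 cs i) (iota 0 nv).
Definition main_check :=
  all (fun cs => if validcs cs && (cs != iota 0 nv) then search cs (order cs) (nseq nv None) else true)
      (allseqs (map cand_cs (iota 0 nv))).

Lemma opts_mono cs alts alts' v x :
  (forall p, nth None alts v = Some p -> nth None alts' v = Some p) ->
  x \in opts cs alts v -> x \in opts cs alts' v.
Proof.
rewrite /opts; case E: (nth None alts v) => [[a b]|] H.
  by rewrite (H _ erefl).
rewrite inE => /eqP ->; exact: mem_head.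
Qed.

Lemma check_mono cs alts alts' c' :
  (forall v p, v < nv -> nth None alts v = Some p -> nth None alts' v = Some p) ->
  checkc cs alts c' -> checkc cs alts' c'.
Proof.
move=> H /and3P[/allP Ho Hp Hh]; apply/and3P; split => //.
apply/allP => v Hv; apply: (opts_mono _ (Ho v Hv)) => p; apply: H.
by move: Hv; rewrite mem_iota add0n.
Qed.

Definition mkalts (full : nat -> nat * nat) := [seq Some (full v) | v <- iota 0 nv].

Lemma search_sound cs ord alts (full : nat -> nat * nat) :
  search cs ord alts ->
  (forall v p, v < nv -> nth None alts v = Some p -> full v = p) ->
  (forall k, k \in ord -> full k \in choices cs k) ->
  exists c', checkc cs (mkalts full) c'.
Proof.
elim: ord alts => [|k rest IH] alts Hs Hf Hk.
all: have Hmono : forall c', checkc cs alts c' -> exists c', checkc cs (mkalts full) c'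
  by move=> c' Hc; exists c'; apply: check_mono Hc => v p Hv /(Hf _ _ Hv) <-;
     rewrite ?Hv // /mkalts (nth_map 0) ?size_iota // nth_iota.
all: move: Hs => /=; case: (findc cs alts) => [c'|]; try (case Hc: (checkc cs alts c'); first by move=> _; exact: Hmono Hc).
all: rewrite //= => /allP Ha; apply: (IH _ (Ha _ (Hk _ (mem_head _ _)))).
all: try (by move=> j Hj; apply: Hk; rewrite inE Hj orbT).
all: by move=> v p Hv; rewrite nth_set_nth /=; case: eqP => [-> [] //|_]; exact: Hf.
Qed.

Lemma mem_allseqs (ls : seq (seq nat)) (s : seq nat) :
  size s = size ls -> (forall i, i < size ls -> nth 0 s i \in nth [::] ls i) -> s \in allseqs ls.
Proof.
elim: ls s => [|l ls IH] [|x s] //= [Hs] H.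
apply/flattenP; exists [seq x :: r | r <- allseqs ls].
  by apply: map_f; exact: (H 0).
apply: map_f; apply: IH => // i Hi; exact: (H i.+1).
Qed.

Lemma main_check_sound cs (full : nat -> nat * nat) :
  main_check -> size cs = nv -> (forall i, i < nv -> nth 0 cs i \in cand_cs i) ->
  validcs cs -> cs != iota 0 nv ->
  (forall k, k < nv -> full k \in choices cs k) ->
  exists c', checkc cs (mkalts full) c'.
Proof.
move=> /allP Hm Hs Hc Hv Hn Hf.
have : cs \in allseqs (map cand_cs (iota 0 nv)).
  apply: mem_allseqs; rewrite size_map size_iota // => i Hi.
  by rewrite (nth_map 0) ?size_iota // nth_iota // Hc.
move=> /Hm; rewrite Hv Hn /= => Hse.
apply: (search_sound Hse).
  by move=> v p _; rewrite nth_nseq; case: ifP.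
move=> k; rewrite mem_sort mem_rev mem_iota add0n => /andP[_]; exact: Hf.
Qed.
Lemma mem_choices cs k x y :
  x < nv -> y < nv -> ptn x != ptn k -> ptn y != ptn k -> nth 0 cs x == x -> nth 0 cs y == y ->
  x < y -> (x, y) \in choices cs k.
Proof.
move=> Hx Hy Hpx Hpy Hcx Hcy Hxy; rewrite /choices.
have Hmem z : z < nv -> ptn z != ptn k -> nth 0 cs z == z ->
  z \in [seq u <- iota 0 nv | (ptn u != ptn k) && (nth 0 cs u == u)].
  by move=> Hz H1 H2; rewrite mem_filter H1 H2 mem_iota.
apply/flattenP; exists [seq (x, y0) | y0 <- [seq y0 <- [seq u <- iota 0 nv | (ptn u != ptn k) && (nth 0 cs u == u)] | x < y0]].
  by apply: (map_f (fun x0 => [seq (x0, y0) | y0 <- _ & x0 < y0])); exact: Hmem.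
by apply: map_f; rewrite mem_filter Hxy Hmem.
Qed.
Definition check2 (LL : seq (seq nat)) (C : seq nat) : bool :=
 [&& size LL == nv, all (fun i => uniq (nth [::] LL i) && (size (nth [::] LL i) == 2)) (iota 0 nv),
     all (fun i => nth 0 C i \in nth [::] LL i) (iota 0 nv), properb C &
     all (fun s => properb s ==> (s == C)) (allseqs LL)].
End Checker.


Section Bridge.
Variables (T : finType) (e : rel T) (pf : T -> nat).
Hypothesis He : forall x y, e x y = (pf x != pf y).
Variables (vl : seq T) (x0 : T).
Hypothesis Hu : uniq vl.
Hypothesis Hall : forall v, v \in vl.

Let pt := map pf vl.
Let n := size vl.
Let f i := nth x0 vl i.
Let idx v := index v vl.

Lemma nv_n : nv pt = n. Proof. by rewrite /nv size_map. Qed.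
Lemma idx_lt v : idx v < n. Proof. by rewrite /idx index_mem. Qed.
Lemma f_idx v : f (idx v) = v. Proof. exact: nth_index. Qed.
Lemma idx_f i : i < n -> idx (f i) = i. Proof. by move=> Hi; rewrite /idx /f index_uniq. Qed.
Lemma ptn_f i : i < n -> ptn pt i = pf (f i). Proof. by move=> Hi; rewrite /ptn /pt (nth_map x0). Qed.
Lemma ptn_idx v : ptn pt (idx v) = pf v. Proof. by rewrite ptn_f ?idx_lt // f_idx. Qed.

Lemma e_irr x : e x x = false. Proof. by rewrite He eqxx. Qed.

Section Unique.
Variables (k : nat) (L : T -> seq nat) (c : T -> nat).
Hypothesis HL : k_list_assignment k L.
Hypothesis Hc : L_coloring e L c.
Hypothesis Huniq : forall c', L_coloring e L c' -> forall v, c' v = c v.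

Lemma key v g : g \in L v -> g != c v -> exists u, (pf u != pf v) && (c u == g).
Proof.
move=> Hg Hgc; apply/existsP; apply: contraT => /negP Hn.
pose c1 w := if w == v then g else c w.
have Hc1 : L_coloring e L c1.
  split=> [w|x y].
    by rewrite /c1; case: eqP => [->|_] //; case: Hc.
  rewrite /c1 He; case: (x =P v) => [->|Hx]; case: (y =P v) => [->|Hy].
  - by rewrite eqxx.
  - move=> Hpf Heq; apply: Hn; apply/existsP; exists y.
    by rewrite eq_sym Hpf Heq eqxx.
  - move=> Hpf Heq; apply: Hn; apply/existsP; exists x.
    by rewrite Hpf -Heq eqxx.
  - by move=> Hpf; case: Hc => _; apply; rewrite He.
move: (Huniq Hc1 v); rewrite /c1 eqxx => Hgv; by rewrite Hgv eqxx in Hgc.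
Qed.
End Unique.

Lemma U1 : UkLC e 1.
Proof.
exists (fun v => [:: idx v]); split; first by move=> v.
exists idx; split.
  split => [v|x y Hxy E]; first by rewrite mem_head.
  have Exy : x = y by rewrite -(f_idx x) E f_idx.
  by rewrite Exy e_irr in Hxy.
by move=> c' [Hm _] v; move: (Hm v); rewrite inE => /eqP.
Qed.

Lemma inI i : i < n -> i \in iota 0 (nv pt).
Proof. by rewrite mem_iota add0n nv_n. Qed.

Lemma U2 LL C : check2 pt LL C -> UkLC e 2.
Proof.
case/and5P => /eqP HsL /allP Hl /allP Hm Hp /allP Hun.
exists (fun v => nth [::] LL (idx v)); split.
  by move=> v; have /andP[-> /eqP] := Hl _ (inI (idx_lt v)).
exists (fun v => nth 0 C (idx v)); split.
  split=> [v|x y Hxy E]; first exact: Hm _ (inI (idx_lt v)).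
  move/allP: (allP Hp _ (inI (idx_lt x))) => /(_ _ (inI (idx_lt y))).
  by rewrite He in Hxy; rewrite E eqxx /= !ptn_idx (negbTE Hxy).
move=> c' [Hm' Hp'] v.
pose s := [seq c' (f i) | i <- iota 0 n].
have Hsn i : i < n -> nth 0 s i = c' (f i) by move=> Hi; rewrite (nth_map 0) ?size_iota // nth_iota.
have Hs : s \in allseqs LL.
  apply: mem_allseqs; first by rewrite size_map size_iota HsL nv_n.
  move=> i; rewrite HsL nv_n => Hi; rewrite Hsn //.
  by have := Hm' (f i); rewrite idx_f.
have Hps : properb pt s.
  apply/allP => u; rewrite mem_iota add0n /nv ?size_map => Hu0; apply/allP => w; rewrite mem_iota add0n ?size_map => Hw0.
  rewrite !Hsn //; case: (ptn pt u =P ptn pt w) => [E|Hne]; first by rewrite orbT.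
  rewrite orbF; apply/eqP; apply: Hp'; rewrite He -!ptn_f //; exact/eqP.
move: (Hun s Hs); rewrite Hps => /eqP Es.
by rewrite -Es Hsn ?idx_lt // f_idx.
Qed.

Section K3.
Variables (L : T -> seq nat) (c : T -> nat).
Hypothesis HL : k_list_assignment 3 L.
Hypothesis Hc : L_coloring e L c.
Hypothesis Huniq : forall c', L_coloring e L c' -> forall v, c' v = c v.

Lemma other v : exists2 g, g \in L v & g != c v.
Proof.
case: (HL v) => Hu3 Hs3.
case Hh: (has (fun g => g != c v) (L v)); first by case/hasP: Hh => g; exists g.
move/negbT: Hh; rewrite -all_predC => Ha.
have : all (pred1 (c v)) (L v) by apply/allP => x /(allP Ha) /=; rewrite negbK.
by move/all_pred1P => E; move: Hu3; rewrite E Hs3 /= inE eqxx.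
Qed.

Lemma inj_contra : injective c -> False.
Proof.
move=> Hinj.
pose g v := odflt v [pick u | (pf u != pf v) && (c u \in L v)].
have Hg v : (pf (g v) != pf v) && (c (g v) \in L v).
  rewrite /g; case: pickP => [u Hu0 //|Hn].
  case: (other v) => gm Hgm Hgc; case: (key Hc Huniq Hgm Hgc) => u /andP[Hpu /eqP Hcu].
  by move: (Hn u); rewrite Hpu Hcu Hgm.
pose P (S : {set T}) := (S != set0) && (g @: S \subset S).
have PT : P setT by rewrite /P subsetT andbT; apply/set0Pn; exists x0.
case: (@arg_minnP _ setT P (fun S => #|S|) PT) => S /andP[Sne Scl] Smin.
have Hsub : g @: S \subset S := Scl.
have Hcard : #|g @: S| == #|S|.
  rewrite eqn_leq leq_imset_card /=; apply: Smin; rewrite /P; apply/andP; split.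
    by case/set0Pn: Sne => w Hw; apply/set0Pn; exists (g w); apply: imset_f.
  by apply: imsetS.
have ginj : {in S &, injective g} by apply/imset_injP.
have gS w : w \in S -> g w \in S by move=> Hw; apply: (subsetP Hsub); apply: imset_f.
pose c2 w := if w \in S then c (g w) else c w.
have c2inj : injective c2.
  move=> x y; rewrite /c2; case: ifP => Hx; case: ifP => Hy.
  - by move/Hinj/ginj; apply.
  - by move/Hinj => E; move: Hy; rewrite -E gS.
  - by move/Hinj => E; move: Hx; rewrite E gS.
  - exact: Hinj.
have Hc2 : L_coloring e L c2.
  split=> [w|x y Hxy].
    by rewrite /c2; case: ifP => _; [case/andP: (Hg w) | case: Hc].
  move/c2inj => E; by rewrite E e_irr in Hxy.
case/set0Pn: Sne => w Hw.
move: (Huniq Hc2 w); rewrite /c2 Hw => /Hinj Hgw.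
by move: (Hg w); rewrite Hgw eqxx.
Qed.

Let col i := c (f i).
Let rep i := find (fun u => col u == col i) (iota 0 n).

Lemma rep_lt i : i < n -> rep i < n.
Proof. by move=> Hi; rewrite -[X in _ < X](size_iota 0) -has_find; apply/hasP; exists i; rewrite ?mem_iota. Qed.

Lemma col_rep i : i < n -> col (rep i) = col i.
Proof.
move=> Hi; have H : has (fun u => col u == col i) (iota 0 n) by apply/hasP; exists i; rewrite ?mem_iota.
by move: (nth_find 0 H); rewrite nth_iota ?add0n ?rep_lt // => /eqP.
Qed.

Lemma rep_le i : i < n -> rep i <= i.
Proof.
move=> Hi; rewrite leqNgt; apply/negP => /(before_find 0); by rewrite nth_iota // add0n eqxx.
Qed.

Lemma rep_eq i j : col i = col j -> rep i = rep j.
Proof. by rewrite /rep => ->. Qed.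

Lemma same_col_part i j : i < n -> j < n -> col i = col j -> ptn pt i = ptn pt j.
Proof.
move=> Hi Hj Hcol; apply/eqP; apply: contraT => Hne.
have He' : e (f i) (f j) by rewrite He -!ptn_f.
by case: Hc => _ /(_ _ _ He').
Qed.

Lemma rep_rep i : i < n -> rep (rep i) = rep i.
Proof. by move=> Hi; apply: rep_eq; rewrite col_rep. Qed.

Let xf g := find (fun u => col u == g) (iota 0 n).

Lemma xf_spec v g : g \in L v -> g != c v ->
  [/\ xf g < n, col (xf g) = g, ptn pt (xf g) != pf v & rep (xf g) = xf g].
Proof.
move=> Hg Hgc; case: (key Hc Huniq Hg Hgc) => u /andP[Hpu /eqP Hcu].
have Hh : has (fun u => col u == g) (iota 0 n).
  by apply/hasP; exists (idx u); rewrite ?mem_iota ?idx_lt //= /col f_idx Hcu.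
have Hlt : xf g < n by rewrite -[X in _ < X](size_iota 0) -has_find.
have Hcol : col (xf g) = g by move: (nth_find 0 Hh); rewrite nth_iota ?add0n // => /eqP.
split => //.
  rewrite (@same_col_part _ (idx u)) ?idx_lt ?ptn_idx //.
  by rewrite Hcol /col f_idx Hcu.
by rewrite /rep Hcol.
Qed.

Let full k := let o := [seq g <- L (f k) | g != col k] in
  (minn (xf (nth 0 o 0)) (xf (nth 0 o 1)), maxn (xf (nth 0 o 0)) (xf (nth 0 o 1))).

Let cs := map rep (iota 0 n).
Lemma cs_nth i : i < n -> nth 0 cs i = rep i.
Proof. by move=> Hi; rewrite /cs (nth_map 0) ?size_iota // nth_iota. Qed.

Lemma full_spec k : k < n ->
  (full k).1 < (full k).2 /\
      forall x, x \in [:: (full k).1; (full k).2] ->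
         [/\ x < n, col x \in L (f k), ptn pt x != ptn pt k & rep x = x].
Proof.
move=> Hk; rewrite /full.
set o := [seq g <- L (f k) | g != col k].
have [Hu3 Hs3] := HL (f k).
have Hin : col k \in L (f k) by case: Hc => H _; exact: H.
have Hso : size o = 2.
  have := count_predC (pred1 (col k)) (L (f k)).
  rewrite Hs3 (count_uniq_mem _ Hu3) Hin size_filter => H.
  by rewrite -[count _ _](addKn 1) H.
have Huo : uniq o by rewrite filter_uniq.
have Ho i : i < 2 -> nth 0 o i \in L (f k) /\ nth 0 o i != c (f k).
  by move=> Hi; have := mem_nth 0 (_ : i < size o); rewrite Hso => /(_ Hi); rewrite mem_filter => /andP[].
have Hdiff : nth 0 o 0 != nth 0 o 1 by rewrite nth_uniq ?Hso.
have [Hl1 Hc1 Hp1 Hr1] := xf_spec (Ho 0 erefl).1 (Ho 0 erefl).2.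
have [Hl2 Hc2 Hp2 Hr2] := xf_spec (Ho 1 erefl).1 (Ho 1 erefl).2.
have Hne : xf (nth 0 o 0) != xf (nth 0 o 1).
  by apply: contra Hdiff => /eqP E; rewrite -Hc1 -Hc2 E.
have H1 : [/\ xf (nth 0 o 0) < n, col (xf (nth 0 o 0)) \in L (f k), ptn pt (xf (nth 0 o 0)) != ptn pt k & rep (xf (nth 0 o 0)) = xf (nth 0 o 0)].
  by split => //; [rewrite Hc1; exact: (Ho 0 erefl).1 | rewrite (ptn_f Hk)].
have H2 : [/\ xf (nth 0 o 1) < n, col (xf (nth 0 o 1)) \in L (f k), ptn pt (xf (nth 0 o 1)) != ptn pt k & rep (xf (nth 0 o 1)) = xf (nth 0 o 1)].
  by split => //; [rewrite Hc2; exact: (Ho 1 erefl).1 | rewrite (ptn_f Hk)].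
rewrite /=; set x1 := xf (nth 0 o 0); set x2 := xf (nth 0 o 1).
have Hmm x : x \in [:: minn x1 x2; maxn x1 x2] -> x = x1 \/ x = x2.
  by rewrite /minn /maxn; case: ifP; rewrite !inE => _ /orP[]/eqP->; auto.
split.
  rewrite /minn /maxn; case: ifP => // /negbT; rewrite -leqNgt leq_eqVlt => /orP[/eqP E|//].
  by move: Hne; rewrite -/x1 -/x2 E eqxx.
by move=> x /Hmm [] ->.
Qed.

Lemma k3_contra : main_check pt -> False.
Proof.
move=> Hmc.
case: (injectiveP c) => [Hinj|Hninj]; first exact: inj_contra.
have Hcsn : cs != iota 0 (nv pt).
  apply/eqP => Heq; apply: Hninj => x y Hxy.
  have : rep (idx x) = rep (idx y) by apply: rep_eq; rewrite /col !f_idx.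
  rewrite -!cs_nth ?idx_lt // Heq nv_n !nth_iota ?idx_lt // !add0n => E.
  by rewrite -(f_idx x) E f_idx.
have Hsz : size cs = nv pt by rewrite size_map size_iota nv_n.
have Hcand i : i < nv pt -> nth 0 cs i \in cand_cs pt i.
  rewrite nv_n => Hi; rewrite cs_nth // mem_filter mem_iota (same_col_part (rep_lt Hi) Hi (col_rep Hi)).
  by rewrite eqxx /= add0n ltnS rep_le.
have Hval : validcs pt cs.
  by apply/allP => i; rewrite mem_iota add0n nv_n => Hi; rewrite !cs_nth ?rep_lt // rep_rep.
have Hch k : k < nv pt -> full k \in choices pt cs k.
  rewrite nv_n => Hk; have [Hlt Hx] := full_spec Hk.
  have [a1 _ b1 d1] := Hx _ (mem_head _ _).
  have : (full k).2 \in [:: (full k).1; (full k).2] by rewrite !inE eqxx orbT.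
  move=> /Hx [a2 _ b2 d2].
  rewrite -[full k]/((full k).1, (full k).2).
  by apply: mem_choices; rewrite ?nv_n ?cs_nth ?d1 ?d2.
case: (main_check_sound Hmc Hsz Hcand Hval Hcsn Hch) => c' /and3P[/allP Ho /allP Hp /hasP[v Hv Hne]].
have Good i : i < n -> let a := nth 0 c' i in
   [/\ a < n, rep a = a & col a \in L (f i)].
  move=> Hi /=; have := Ho i; rewrite mem_iota add0n nv_n Hi => /(_ isT).
  rewrite /opts /mkalts (nth_map 0) ?size_iota ?nv_n // nth_iota // add0n.
  have [Hlt Hx] := full_spec Hi; move: Hx Hlt; case: (full i) => x y /= Hx _.
  rewrite inE => /orP[/eqP ->| Hm].
    rewrite cs_nth // rep_rep // col_rep // rep_lt //; split => //; by case: Hc => H _; exact: H.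
  by have [? ? ? ?] := Hx _ Hm.
pose c2 w := col (nth 0 c' (idx w)).
have Hc2 : L_coloring e L c2.
  split=> [w|x y Hxy].
    by have [_ _] := Good _ (idx_lt w); rewrite /c2 f_idx.
  rewrite /c2 => Heq.
  have [ax rx _] := Good _ (idx_lt x); have [ay ry _] := Good _ (idx_lt y).
  have E : nth 0 c' (idx x) = nth 0 c' (idx y) by rewrite -rx -ry; apply: rep_eq.
  have := Hp (idx x); rewrite mem_iota add0n nv_n idx_lt => /(_ isT) /allP /(_ (idx y)).
  rewrite mem_iota add0n ?nv_n /nv ?size_map idx_lt E eqxx /= !ptn_idx => /(_ isT) Hpp.
  by rewrite He Hpp in Hxy.
move: Hv; rewrite mem_iota add0n nv_n => Hv.
have := Huniq Hc2 (f v); rewrite /c2 idx_f // => Hcv.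
have [av rv _] := Good _ Hv.
have : nth 0 c' v = rep v.
  by rewrite -rv; rewrite (rep_eq Hcv) -/(col v) (rep_eq (esym (col_rep Hv))).
by rewrite -cs_nth // => E; rewrite E eqxx in Hne.
Qed.

End K3.
End Bridge.


Definition pfv (s : seq nat) (v : cmp_vertex s) : nat := val (tag v).
Definition code (s : seq nat) (v : cmp_vertex s) : nat * nat := (val (tag v), val (tagged v)).

Lemma code_inj s : injective (@code s).
Proof.
case=> i x [j y]; rewrite /code /= => -[Eij Exy].
have E : i = j := val_inj Eij. subst j.
by congr existT; apply: val_inj.
Qed.

Lemma cmp_He s (x y : cmp_vertex s) : cmp_edge x y = (pfv x != pfv y).
Proof. by rewrite /cmp_edge /pfv -val_eqE. Qed.

Lemma generic s (vl : seq (cmp_vertex s)) (x0 : cmp_vertex s) LL C :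
  uniq (map (@code s) vl) ->
  all (fun a => all (fun b => (a, b) \in map (@code s) vl) (iota 0 (nth 0 s a))) (iota 0 (size s)) ->
  main_check (map (@pfv s) vl) -> check2 (map (@pfv s) vl) LL C ->
  is_m_number (@cmp_edge s) 3.
Proof.
move=> Hu Ha Hm H2.
have Hu' : uniq vl by move: Hu; rewrite (map_inj_uniq (@code_inj s)).
have Hall : forall v, v \in vl.
  move=> v; rewrite -(mem_map (@code_inj s)).
  have Ht : val (tag v) \in iota 0 (size s) by rewrite mem_iota add0n ltn_ord.
  have := allP Ha _ Ht => /allP; apply.
  by rewrite mem_iota add0n; exact: ltn_ord.
split => //; split.
  move=> [L [HL [c [Hc Hun]]]].
  exact: (k3_contra (@cmp_He s) x0 Hu' Hall HL Hc Hun Hm).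
move=> k /andP[]; case: k => [//|[|[|//]]] _ _ HM; apply: HM.
  exact: (U1 (@cmp_He s) x0 Hall).
exact: (U2 (@cmp_He s) x0 Hu' Hall H2).
Qed.


Definition mkv (s : seq nat) (i j : nat) (Hi : i < size s) (Hj : j < nth 0 s i) : cmp_vertex s :=
  existT (fun i : 'I_(size s) => 'I_(nth 0 s i)) (Ordinal Hi) (Ordinal Hj).

Definition sA := [:: 2; 2; 3].
Definition vlA : seq (cmp_vertex sA) :=
  [:: @mkv sA 0 0 erefl erefl; @mkv sA 0 1 erefl erefl; @mkv sA 1 0 erefl erefl; @mkv sA 1 1 erefl erefl;
      @mkv sA 2 0 erefl erefl; @mkv sA 2 1 erefl erefl; @mkv sA 2 2 erefl erefl].
Definition sB := [:: 2; 3; 3].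
Definition vlB : seq (cmp_vertex sB) :=
  [:: @mkv sB 0 0 erefl erefl; @mkv sB 0 1 erefl erefl; @mkv sB 1 0 erefl erefl; @mkv sB 1 1 erefl erefl;
      @mkv sB 1 2 erefl erefl; @mkv sB 2 0 erefl erefl; @mkv sB 2 1 erefl erefl; @mkv sB 2 2 erefl erefl].

Lemma mA : is_m_number (@cmp_edge sA) 3.
Proof.
apply: (@generic sA vlA (@mkv sA 0 0 erefl erefl)
   [:: [:: 0; 2]; [:: 1; 3]; [:: 0; 1]; [:: 0; 3]; [:: 0; 1]; [:: 1; 2]; [:: 1; 2]]
   [:: 2; 3; 0; 0; 1; 1; 1]); by vm_compute.
Qed.

Lemma mB : is_m_number (@cmp_edge sB) 3.
Proof.
apply: (@generic sB vlB (@mkv sB 0 0 erefl erefl)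
   [:: [:: 0; 2]; [:: 1; 3]; [:: 0; 1]; [:: 0; 3]; [:: 0; 1]; [:: 1; 2]; [:: 1; 2]; [:: 1; 2]]
   [:: 2; 3; 0; 0; 0; 1; 1; 1]); by vm_compute.
Qed.

Theorem proposition3p4 :
  is_m_number (@cmp_edge [:: 2; 2; 3]) 3 /\ is_m_number (@cmp_edge [:: 2; 3; 3]) 3.
Proof. split; [exact: mA | exact: mB]. Qed.
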